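(* Let $\mathfrak g$ be a finite-dimensional simple complex Lie algebra of classical type and $\mathfrak a\subseteq\mathfrak g$ a semisimple Levi subalgebra whose simple roots are simple roots of $\mathfrak g$. Let $W$ be a finite-dimensional $\mathfrak g\otimes\mathbb C[t]$-module and $w\in W$ a weight vector of weight $\lambda$ (for $\mathfrak h=\mathfrak h\otimes1$) such that $U(\mathfrak n^-\otimes\mathbb C[t]).w=W$. Then $$U(\mathfrak a\otimes\mathbb C[t]).w=\sum_{\mu\in Q^+_{\mathfrak a}}W_{\lambda-\mu},$$ where $W_\nu$ denotes the $\nu$-weight space of $W$.
   Context: $\mathfrak g$ is a finite-dimensional simple complex Lie algebra of classical type with triangular decomposition $\mathfrak g=\mathfrak n^+\oplus\mathfrak h\oplus\mathfrak n^-$, roots $R$, simple roots $\Pi$. A Levi subalgebra is, for $R'\subseteq R$ closed under addition (within $R$) and under $\alpha\mapsto-\alpha$, $\mathfrak a=\sum_{\alpha\in R'}[\mathfrak g_\alpha,\mathfrak g_{-\alpha}]\oplus\bigoplus_{\alpha\in R'}\mathfrak g_\alpha$, with induced triangular decomposition $\mathfrak n^\pm_{\mathfrak a}\subseteq\mathfrak n^\pm$, $\mathfrak h_{\mathfrak a}\subseteq\mathfrak h$, positive roots $R^+_{\mathfrak a}=R'\cap R^+$ and simple roots $\Pi_{\mathfrak a}$; here $\Pi_{\mathfrak a}\subseteq\Pi$ is assumed. $Q^+_{\mathfrak a}$ is the $\mathbb Z_{\ge0}$-span of $R^+_{\mathfrak a}$. The current algebra $\mathfrak g\otimes\mathbb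 C[t]$ has bracket $[x\otimes p,y\otimes q]=[x,y]\otimes pq$. *)

(* Defs.v *)
From HB Require Import structures.
From mathcomp Require Import all_boot all_order all_algebra.
From mathcomp Require Import complex.
From mathcomp Require Import reals.
Set Implicit Arguments.
Unset Strict Implicit.
Unset Printing Implicit Defensive.
Import Order.TTheory GRing.Theory Num.Theory.
Local Open Scope ring_scope.

Section Defs.
Variable R : realType.
Local Notation C := (R[i])%C.

Definition lbr (N : nat) (x y : 'M[C]_N) : 'M[C]_N := x *m y - y *m x.

Definition orth_form (N : nat) : 'M[C]_N :=
  \matrix_(i, j) (if (i + j == N.-1)%N then 1 else 0).
Definition sympl_form (N : nat) : 'M[C]_N :=
  \matrix_(i, j) (if (i + j == N.-1)%N then (if (i < N./2)%N then 1 else -1) else 0).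

(** [g] is (the standard matrix model of) a simple complex Lie algebra of
    classical type: sl_N (N >= 2), so_N (N = 3 or N >= 5), sp_N (N even >= 2),
    the orthogonal/symplectic forms having antidiagonal Gram matrices, so that
    diagonal / strictly upper / strictly lower triangular elements give the
    standard triangular decomposition. *)
Definition classical_alg (N : nat) (g : 'M[C]_N -> Prop) : Prop :=
  [\/ (2 <= N)%N /\ (forall x, g x <-> \tr x = 0),
      (N = 3 \/ 5 <= N)%N /\
        (forall x, g x <-> x^T *m orth_form N + orth_form N *m x = 0)
    | [/\ (2 <= N)%N, ~~ odd N &
        (forall x, g x <-> x^T *m sympl_form N + sympl_form N *m x = 0)]].

Definition cartan N (g : 'M[C]_N -> Prop) (x : 'M[C]_N) : Prop :=
  g x /\ forall i j : 'I_N, i != j -> x i j = 0.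
Definition npos N (g : 'M[C]_N -> Prop) (x : 'M[C]_N) : Prop :=
  g x /\ forall i j : 'I_N, (j <= i)%N -> x i j = 0.
Definition nneg N (g : 'M[C]_N -> Prop) (x : 'M[C]_N) : Prop :=
  g x /\ forall i j : 'I_N, (i <= j)%N -> x i j = 0.

(** Weights: functions on matrices, only their values on h matter. *)
Definition eqh N (g : 'M[C]_N -> Prop) (a b : 'M[C]_N -> C) : Prop :=
  forall h, cartan g h -> a h = b h.

Definition rootsp N (g : 'M[C]_N -> Prop) (a : 'M[C]_N -> C) (x : 'M[C]_N) : Prop :=
  g x /\ forall h, cartan g h -> lbr h x = a h *: x.
Definition is_root N (g : 'M[C]_N -> Prop) (a : 'M[C]_N -> C) : Prop :=
  (exists h, cartan g h /\ a h != 0) /\ (exists x, rootsp g a x /\ x != 0).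
Definition pos_root N (g : 'M[C]_N -> Prop) (a : 'M[C]_N -> C) : Prop :=
  is_root g a /\ exists x, [/\ rootsp g a x, x != 0 & npos g x].

Definition simple_in N (g : 'M[C]_N -> Prop) (P : ('M[C]_N -> C) -> Prop)
    (a : 'M[C]_N -> C) : Prop :=
  P a /\ ~ (exists b c, [/\ P b, P c & eqh g a (fun h => b h + c h)]).

Definition is_levi N (g : 'M[C]_N -> Prop) (R' : ('M[C]_N -> C) -> Prop) : Prop :=
  [/\ (forall a, R' a -> is_root g a),
      (forall a b, R' a -> R' b -> is_root g (fun h => a h + b h) ->
          R' (fun h => a h + b h)),
      (forall a, R' a -> R' (fun h => - a h)) &
      (forall a, simple_in g (fun b => R' b /\ pos_root g b) a ->
          simple_in g (pos_root g) a)].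

Definition inspan (V : lmodType C) (P : V -> Prop) (v : V) : Prop :=
  exists (n : nat) (c : 'I_n -> C) (u : 'I_n -> V),
    (forall i, P (u i)) /\ v = \sum_(i < n) c i *: u i.

Definition levi_alg N (g : 'M[C]_N -> Prop) (R' : ('M[C]_N -> C) -> Prop) :
    'M[C]_N -> Prop :=
  inspan (fun x =>
    (exists a y z, [/\ R' a, rootsp g a y, rootsp g (fun h => - a h) z &
                      x = lbr y z])
    \/ (exists a, R' a /\ rootsp g a x)).

Definition inQplus N (g : 'M[C]_N -> Prop) (R' : ('M[C]_N -> C) -> Prop)
    (mu : 'M[C]_N -> C) : Prop :=
  exists (n : nat) (al : 'I_n -> 'M[C]_N -> C),
    (forall i, R' (al i) /\ pos_root g (al i)) /\
    eqh g mu (fun h => \sum_(i < n) al i h).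

(** A representation of g (x) C[t] on W = C^d: [rho x k] is the action of
    x (x) t^k; it is linear in x and respects brackets
    [x (x) t^k, y (x) t^l] = [x,y] (x) t^(k+l). *)
Definition current_rep N d (g : 'M[C]_N -> Prop)
    (rho : 'M[C]_N -> nat -> 'M[C]_d) : Prop :=
  (forall (c : C) x y k, g x -> g y ->
      rho (c *: x + y) k = c *: rho x k + rho y k) /\
  (forall x y k l, g x -> g y ->
      lbr (rho x k) (rho y l) = rho (lbr x y) (k + l)%N).

(** U(L (x) C[t]).w : span of all w, (x1 t^k1)...(xm t^km).w with xi in L. *)
Definition Ugen N d (rho : 'M[C]_N -> nat -> 'M[C]_d) (L : 'M[C]_N -> Prop)
    (w : 'cV[C]_d) : 'cV[C]_d -> Prop :=
  inspan (fun u => exists s : seq ('M[C]_N * nat),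
    (forall p, p \in s -> L p.1) /\
    u = foldr (fun p v => rho p.1 p.2 *m v) w s).

(** v lies in the weight space W_nu (for h = h (x) 1). *)
Definition weight_vec N d (g : 'M[C]_N -> Prop) (rho : 'M[C]_N -> nat -> 'M[C]_d)
    (nu : 'M[C]_N -> C) (v : 'cV[C]_d) : Prop :=
  forall h, cartan g h -> rho h 0%N *m v = nu h *: v.

End Defs.

(* Main.v *)
Require Import Defs.
From HB Require Import structures.
From mathcomp Require Import all_boot all_order all_algebra.
From mathcomp Require Import complex.
From mathcomp Require Import reals zify ring.
From Stdlib Require Import Classical ClassicalEpsilon FunctionalExtensionality PropExtensionality.
Set Implicit Arguments. Unset Strict Implicit. Unset Printing Implicit Defensive.
Import Order.TTheory GRing.Theory Num.Theory.
Local Open Scope ring_scope.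

Section Span.
Variable R : realType.
Local Notation C := (R[i])%C.
Variable V : lmodType C.

Definition spn (P : V -> Prop) (v : V) := exists s : seq (C * V),
  (forall p, p \in s -> P p.2) /\ v = \sum_(p <- s) p.1 *: p.2.

Lemma inspan_spn P v : inspan P v <-> spn P v.
Proof.
split.
  move=> [n [c [u [Pu ->]]]].
  exists [seq (c i, u i) | i <- enum 'I_n]; split.
    by move=> p /mapP [i _ ->]; exact: Pu.
  by rewrite big_map big_enum; apply: eq_bigl.
move=> [s [Ps ->]].
exists (size s), (fun i => (nth (0,0) s i).1), (fun i => (nth (0,0) s i).2); split.
  by move=> i; apply: Ps; apply: mem_nth.
by rewrite (big_nth (0,0)) big_mkord.
Qed.

Lemma spn_gen (P : V -> Prop) v : P v -> spn P v.
Proof.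
move=> Pv; exists [:: (1, v)]; split; first by move=> p; rewrite inE => /eqP ->.
by rewrite big_seq1 scale1r.
Qed.

Lemma spn0 P : spn P 0.
Proof. by exists [::]; split => //; rewrite big_nil. Qed.

Lemma spnD P u v : spn P u -> spn P v -> spn P (u + v).
Proof.
move=> [s [Ps ->]] [t [Pt ->]]; exists (s ++ t); split; last by rewrite big_cat.
by move=> p; rewrite mem_cat => /orP [] ?; [apply: Ps|apply: Pt].
Qed.

Lemma spnZ P c v : spn P v -> spn P (c *: v).
Proof.
move=> [s [Ps ->]]; exists [seq (c * p.1, p.2) | p <- s]; split.
  move=> p /mapP [q qs ->]; exact: (Ps q qs).
by rewrite big_map scaler_sumr; apply: eq_bigr => p _; rewrite scalerA.
Qed.

Lemma spn_trans (P Q : V -> Prop) v : (forall u, P u -> spn Q u) -> spn P v -> spn Q v.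
Proof.
move=> PQ [s [Ps ->]]; elim: s Ps => [|p s IH] Ps; first by rewrite big_nil; apply: spn0.
rewrite big_cons; apply: spnD; first by apply: spnZ; apply: PQ; apply: Ps; rewrite inE eqxx.
by apply: IH => q qs; apply: Ps; rewrite inE qs orbT.
Qed.

Lemma spn_sum (P : V -> Prop) (I : eqType) (r : seq I) (F : I -> V) :
  (forall i, i \in r -> spn P (F i)) -> spn P (\sum_(i <- r) F i).
Proof.
elim: r => [|i r IH] H; first by rewrite big_nil; apply: spn0.
rewrite big_cons; apply: spnD; first by apply: H; rewrite inE eqxx.
by apply: IH => j jr; apply: H; rewrite inE jr orbT.
Qed.

End Span.

Section SpanMap.
Variable R : realType.
Local Notation C := (R[i])%C.
Variables V W : lmodType C.
Lemma spn_map (P : V -> Prop) (Q : W -> Prop) (f : V -> W) v :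
  (forall a b, f (a + b) = f a + f b) -> (forall c a, f (c *: a) = c *: f a) ->
  (forall u, P u -> spn Q (f u)) -> spn P v -> spn Q (f v).
Proof.
move=> fD fZ PQ [s [Ps ->]].
have f0 : f 0 = 0 by rewrite -(scale0r 0) fZ scale0r.
elim: s Ps => [|p s IH] Ps; first by rewrite big_nil f0; apply: spn0.
rewrite big_cons fD; apply: spnD; first by rewrite fZ; apply: spnZ; apply: PQ; apply: Ps; rewrite inE eqxx.
by apply: IH => q qs; apply: Ps; rewrite inE qs orbT.
Qed.
End SpanMap.

Definition asb (P : Prop) : bool := if excluded_middle_informative P then true else false.
Lemma asbP P : reflect P (asb P).
Proof. by rewrite /asb; case: excluded_middle_informative => H; constructor. Qed.

Section Eig.
Variable R : realType.
Local Notation C := (R[i])%C.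
Variable d : nat.
Variable A : 'M[C]_d.

Definition Qpol (s : seq (C * 'cV[C]_d)) : 'M[C]_d :=
  foldr (fun p M => (A - p.1%:M) *m M) 1%:M s.

Lemma Qpol_eig s e (u : 'cV[C]_d) : A *m u = e *: u ->
  Qpol s *m u = (\prod_(p <- s) (e - p.1)) *: u.
Proof.
move=> Hu; elim: s => [|p s IH] /=; first by rewrite big_nil scale1r mul1mx.
rewrite -mulmxA IH big_cons -scalemxAr mulmxBl Hu mul_scalar_mx -scalerBl.
by rewrite scalerA mulrC.
Qed.

Lemma E1 (s : seq (C * 'cV[C]_d)) c :
  (forall p, p \in s -> A *m p.2 = p.1 *: p.2 /\ p.1 != c) ->
  A *m (\sum_(p <- s) p.2) = c *: (\sum_(p <- s) p.2) ->
  \sum_(p <- s) p.2 = 0.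
Proof.
move=> Hs Hc.
have H1 : Qpol s *m (\sum_(p <- s) p.2) = 0.
  rewrite mulmx_sumr big1_seq // => p ps.
  rewrite (Qpol_eig s (Hs p ps).1).
  have /eqP -> : \prod_(q <- s) (p.1 - q.1) == 0.
    by rewrite prodf_seq_eq0; apply/hasP; exists p; rewrite //= subrr.
  by rewrite scale0r.
move: H1; rewrite (Qpol_eig s Hc) => /eqP; rewrite scaler_eq0 => /orP [|/eqP //].
rewrite prodf_seq_eq0 => /hasP [p ps]; rewrite subr_eq0 => /eqP cp.
by move: (Hs p ps).2; rewrite cp eqxx.
Qed.

Lemma E1' (us : seq 'cV[C]_d) c :
  (forall u, u \in us -> exists e, e != c /\ A *m u = e *: u) ->
  A *m (\sum_(u <- us) u) = c *: (\sum_(u <- us) u) ->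
  \sum_(u <- us) u = 0.
Proof.
move=> Hus Hc.
have [es [Hes Hp]] : exists es : seq (C * 'cV[C]_d), map snd es = us /\
   forall p, p \in es -> A *m p.2 = p.1 *: p.2 /\ p.1 != c.
  elim: us Hus {Hc} => [|u us IH] Hus; first by exists [::].
  have [es [Hes Hp]] := IH (fun v vu => Hus v ltac:(by rewrite inE vu orbT)).
  have [e [ec He]] := Hus u (mem_head _ _).
  exists ((e, u) :: es); split; first by rewrite /= Hes.
  move=> p; rewrite inE => /orP [/eqP -> //|]; exact: Hp.
move: Hc; rewrite -Hes !big_map => Hc.
exact: E1 Hp Hc.
Qed.
End Eig.

Section Rep.
Variable R : realType.
Local Notation C := (R[i])%C.
Variables (N d : nat) (g : 'M[C]_N -> Prop) (rho : 'M[C]_N -> nat -> 'M[C]_d).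
Local Notation M := ('M[C]_N).
Hypothesis glin : forall (c : C) x y, g x -> g y -> g (c *: x + y).
Hypothesis g0 : g 0.
Hypothesis gbr : forall x y, g x -> g y -> g (lbr x y).
Hypothesis rep : current_rep g rho.

Lemma rho0 k : rho 0 k = 0.
Proof.
have := rep.1 1 0 0 k g0 g0; rewrite !scale1r addr0 => H.
by apply: (addrI (rho 0 k)); rewrite addr0 -H.
Qed.

Lemma gZ c x : g x -> g (c *: x).
Proof. by move=> gx; have := glin c gx g0; rewrite addr0. Qed.

Lemma gD x y : g x -> g y -> g (x + y).
Proof. by move=> gx gy; have := glin 1 gx gy; rewrite scale1r. Qed.

Lemma rhoZ c x k : g x -> rho (c *: x) k = c *: rho x k.
Proof. by move=> gx; have := rep.1 c x 0 k gx g0; rewrite !addr0 rho0 addr0. Qed.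

Lemma rhoD x y k : g x -> g y -> rho (x + y) k = rho x k + rho y k.
Proof. by move=> gx gy; have := rep.1 1 x y k gx gy; rewrite !scale1r. Qed.

Lemma gsum (s : seq (C * M)) : (forall p, p \in s -> g p.2) -> g (\sum_(p <- s) p.1 *: p.2).
Proof.
elim: s => [|p s IH] Hs; first by rewrite big_nil.
rewrite big_cons; apply: gD; first by apply: gZ; apply: Hs; rewrite inE eqxx.
by apply: IH => q qs; apply: Hs; rewrite inE qs orbT.
Qed.

Lemma rho_sum (s : seq (C * M)) k : (forall p, p \in s -> g p.2) ->
  rho (\sum_(p <- s) p.1 *: p.2) k = \sum_(p <- s) p.1 *: rho p.2 k.
Proof.
elim: s => [|p s IH] Hs; first by rewrite !big_nil rho0.
have Hs' : forall q, q \in s -> g q.2 by move=> q qs; apply: Hs; rewrite inE qs orbT.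
have gp : g p.2 by apply: Hs; rewrite inE eqxx.
by rewrite !big_cons rhoD ?rhoZ ?IH //; [apply: gZ | apply: gsum].
Qed.

Lemma rho_spn (P : M -> Prop) (Q : 'cV[C]_d -> Prop) x k t :
  (forall y, P y -> g y) -> spn P x ->
  (forall y, P y -> spn Q (rho y k *m t)) -> spn Q (rho x k *m t).
Proof.
move=> Pg [s [Hs ->]] HQ.
rewrite rho_sum; last by move=> p ps; apply: Pg; apply: Hs.
rewrite mulmx_suml; apply: spn_sum => p ps; rewrite -scalemxAl; apply: spnZ.
by apply: HQ; apply: Hs.
Qed.

Lemma mul_comm_lbr n (A B : 'M[C]_n) (t : 'cV[C]_n) :
  A *m (B *m t) = B *m (A *m t) + lbr A B *m t.
Proof. by rewrite /lbr mulmxBl !mulmxA addrC subrK. Qed.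

Lemma wv_root (nu a : M -> C) x k t : weight_vec g rho nu t -> rootsp g a x ->
  weight_vec g rho (fun h => nu h + a h) (rho x k *m t).
Proof.
move=> Ht [gx Hx] h ch.
rewrite mul_comm_lbr (rep.2 _ _ _ _ ch.1 gx) add0n (Hx h ch) rhoZ // (Ht h ch).
by rewrite -scalemxAr -scalemxAl -scalerDl.
Qed.

Lemma wv_ext (nu nu' : M -> C) t : (forall h, cartan g h -> nu h = nu' h) ->
  weight_vec g rho nu t -> weight_vec g rho nu' t.
Proof. by move=> E Ht h ch; rewrite Ht // E. Qed.

Lemma wvZ (nu : M -> C) c t : weight_vec g rho nu t -> weight_vec g rho nu (c *: t).
Proof. by move=> Ht h ch; rewrite -scalemxAr Ht // !scalerA mulrC. Qed.

Lemma rootsp_eqh a b x : eqh g a b -> rootsp g a x -> rootsp g b x.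
Proof. by move=> E [gx Hx]; split => // h ch; rewrite Hx // E. Qed.

Lemma is_root_eqh a b : eqh g a b -> is_root g a -> is_root g b.
Proof.
move=> E [[h [ch ah]] [x [Hx x0]]]; split; first by exists h; rewrite -E.
by exists x; split => //; apply: rootsp_eqh Hx.
Qed.

Lemma pos_root_eqh a b : eqh g a b -> pos_root g a -> pos_root g b.
Proof.
move=> E [Ha [x [Hx x0 nx]]]; split; first exact: is_root_eqh Ha.
by exists x; split => //; apply: rootsp_eqh Hx.
Qed.

Variables (R' : (M -> C) -> Prop) (w : 'cV[C]_d) (lam : M -> C).
Hypothesis levi : is_levi g R'.

Inductive nword : 'cV[C]_d -> (M -> C) -> Prop :=
| nw0 : nword w lam
| nwS b x k t nu : pos_root g b -> rootsp g (fun h => - b h) x -> nword t nu ->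
    nword (rho x k *m t) (fun h => nu h - b h).

Definition LW (t : 'cV[C]_d) := exists s : seq (M * nat),
  (forall p, p \in s -> exists ga, R' ga /\ rootsp g ga p.1) /\
  t = foldr (fun p v => rho p.1 p.2 *m v) w s.

Lemma LW_cons t ga x k : LW t -> R' ga -> rootsp g ga x -> LW (rho x k *m t).
Proof.
move=> [s [Hs ->]] Rga Hx; exists ((x, k) :: s); split => //.
move=> p; rewrite inE => /orP [/eqP -> /=|]; first by exists ga.
exact: Hs.
Qed.

Definition levigen (x : M) :=
  (exists a y z, [/\ R' a, rootsp g a y, rootsp g (fun h => - a h) z & x = lbr y z])
  \/ (exists a, R' a /\ rootsp g a x).

Lemma levigen_g x : levigen x -> g x.
Proof.
by move=> [[a [y [z [_ [gy _] [gz _] ->]]]]|[a [_ [gx _]]]] //; apply: gbr.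
Qed.

Lemma LW_gen t x k : LW t -> levigen x -> spn LW (rho x k *m t).
Proof.
move=> Ht [[a [y [z [Ra Hy Hz ->]]]]|[a [Ra Hx]]]; last first.
  by apply: spn_gen; apply: LW_cons Ht Ra Hx.
have [_ _ Hneg _] := levi.
rewrite -[k]addn0 -(rep.2 _ _ _ _ Hy.1 Hz.1) /lbr mulmxBl -!mulmxA.
apply: spnD; first by apply: spn_gen; apply: (@LW_cons _ a y k _ Ra Hy); apply: (@LW_cons _ _ z 0 Ht (Hneg _ Ra) Hz).
rewrite -scaleN1r; apply: spnZ; apply: spn_gen.
by apply: (@LW_cons _ _ z 0 _ (Hneg _ Ra) Hz); apply: (@LW_cons _ a y k Ht Ra Hy).
Qed.

Lemma LW_levi t x k : LW t -> levi_alg g R' x -> spn LW (rho x k *m t).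
Proof.
move=> Ht /inspan_spn Hx; apply: (rho_spn levigen_g Hx) => y Hy.
exact: LW_gen.
Qed.

Definition UG (L : M -> Prop) (u : 'cV[C]_d) := exists s : seq (M * nat),
    (forall p, p \in s -> L p.1) /\ u = foldr (fun p v => rho p.1 p.2 *m v) w s.

Lemma Ugen_levi_LW v : Ugen rho (levi_alg g R') w v -> spn LW v.
Proof.
move/inspan_spn; apply: spn_trans => u [s [Hs ->]].
elim: s Hs => [|p s IH] Hs /=.
  by apply: spn_gen; exists [::].
have IH' := IH (fun q qs => Hs q ltac:(by rewrite inE qs orbT)).
apply: (spn_map (mulmxDr _) (fun c a => esym (scalemxAr c _ a)) _ IH') => t Ht.
by apply: LW_levi Ht (Hs p (mem_head _ _)).
Qed.

Lemma LW_UG t : LW t -> UG (levi_alg g R') t.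
Proof.
move=> [s [Hs ->]]; exists s; split => // p ps.
have [ga [Rga Hp]] := Hs p ps.
by apply/inspan_spn; apply: spn_gen; right; exists ga.
Qed.

Hypothesis Hneg_span : forall x, nneg g x ->
  spn (fun y => exists b, pos_root g b /\ rootsp g (fun h => - b h) y) x.

Definition NW t := exists nu, nword t nu.

Lemma Ugen_nneg_NW v : Ugen rho (nneg g) w v -> spn NW v.
Proof.
move/inspan_spn; apply: spn_trans => u [s [Hs ->]].
elim: s Hs => [|p s IH] Hs /=.
  by apply: spn_gen; exists lam; apply: nw0.
have IH' := IH (fun q qs => Hs q ltac:(by rewrite inE qs orbT)).
apply: (spn_map (mulmxDr _) (fun c a => esym (scalemxAr c _ a)) _ IH') => t [nu Ht].
have Hx := Hneg_span (Hs p (mem_head _ _)).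
apply: (rho_spn _ Hx) => [y [b [_ [gy _]]] //|y [b [Hb Hy]]].
by apply: spn_gen; exists (fun h => nu h - b h); apply: nwS.
Qed.

Hypothesis Hw : weight_vec g rho lam w.

Lemma nword_wv t nu : nword t nu -> weight_vec g rho nu t.
Proof. by elim => // b x k t' nu' _ Hx _ IH; apply: wv_root. Qed.

Variable hS : M.
Hypotheses (hSc : cartan g hS) (HR'0 : forall ga, R' ga -> ga hS = 0)
  (Hpos : forall b, pos_root g b -> 0 <= b hS)
  (Hzero : forall b, pos_root g b -> b hS = 0 -> exists ga, R' ga /\ eqh g ga b).

Lemma nw_ge t nu : nword t nu -> 0 <= lam hS - nu hS.
Proof.
elim; first by rewrite subrr.
move=> b x k t' nu' Hb _ _ IH.
by rewrite opprB addrA addrAC; apply: addr_ge0 => //; apply: Hpos.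
Qed.

Definition ext n (al : 'I_n -> M -> C) (ga : M -> C) : 'I_n.+1 -> M -> C :=
  fun i => if unlift ord_max i is Some j then al j else ga.

Lemma ext_sum n (al : 'I_n -> M -> C) ga h :
  \sum_(i < n.+1) ext al ga i h = \sum_(i < n) al i h + ga h.
Proof.
rewrite big_ord_recr /=; congr (_ + _); last by rewrite /ext unlift_none.
by apply: eq_bigr => i _; rewrite /ext (_ : widen_ord _ i = lift ord_max i) ?liftK //; apply: val_inj; rewrite /= /bump leqNgt ltn_ord add0n.
Qed.

Lemma nw_good t nu : nword t nu -> nu hS = lam hS ->
  LW t /\ inQplus g R' (fun h => lam h - nu h).
Proof.
elim.
  move=> _; split; first by exists [::].
  by exists 0%N, (fun _ _ => 0); split => [[]//|h _]; rewrite subrr big_ord0.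
move=> b x k t' nu' Hb Hx Ht IH Heq.
have Hge := nw_ge Ht; have Hb0 := Hpos Hb.
have : (lam hS - nu' hS) + b hS == 0.
  by rewrite -Heq addrAC subrK subrr.
rewrite paddr_eq0 // => /andP [/eqP e1 /eqP e2].
have e1' : nu' hS = lam hS by apply/eqP; rewrite eq_sym -subr_eq0 e1.
have [LWt [n [al [Hal Hal2]]]] := IH e1'.
have [ga [Rga Ega]] := Hzero Hb e2.
have [_ _ Hneg _] := levi.
split.
  apply: LW_cons LWt (Hneg _ Rga) _.
  by apply: rootsp_eqh Hx => h ch; rewrite Ega.
exists n.+1, (ext al ga); split.
  move=> i; rewrite /ext; case: unlift => [j|]; first exact: Hal.
  by split => //; apply: pos_root_eqh Hb => h ch; rewrite Ega.
move=> h ch; rewrite ext_sum -Hal2 // Ega //.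
by rewrite opprB addrA addrAC.
Qed.

Hypothesis HW : forall v, Ugen rho (nneg g) w v.

Definition GNW t := exists nu, nword t nu /\ nu hS = lam hS.

Lemma key t : spn NW t -> rho hS 0 *m t = lam hS *: t -> spn GNW t.
Proof.
move=> [s [Hs ->]] Ht.
rewrite (bigID (fun p => asb (GNW p.2))) /=.
set G := \sum_(p <- s | _) _; set B := \sum_(p <- s | _) _.
have HG : rho hS 0 *m G = lam hS *: G.
  rewrite /G mulmx_sumr scaler_sumr; apply: eq_bigr => p /asbP [nu [Hnu Enu]].
  by rewrite -scalemxAr (nword_wv Hnu) // -Enu !scalerA mulrC.
have HB : B = 0.
  have -> : B = \sum_(u <- [seq p.1 *: p.2 | p <- [seq p <- s | ~~ asb (GNW p.2)]]) u.
    by rewrite big_map big_filter.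
  apply: (E1' (A := rho hS 0) (c := lam hS)).
    move=> u /mapP [p]; rewrite mem_filter => /andP [/asbP Hp ps] ->.
    have [nu Hnu] := Hs p ps.
    exists (nu hS); split.
      by apply/eqP => E; apply: Hp; exists nu.
    by rewrite -scalemxAr (nword_wv Hnu) // !scalerA mulrC.
  rewrite big_map big_filter -/B.
  have -> : B = (G + B) - G by rewrite addrC addKr.
  have HGB : G + B = \sum_(p <- s) p.1 *: p.2 by rewrite [RHS](bigID (fun p => asb (GNW p.2))).
  by rewrite mulmxBr HGB Ht -HGB HG scalerBr.
rewrite HB addr0 /G -big_filter; apply: spn_sum => p; rewrite mem_filter => /andP [/asbP Hp _]; apply: spnZ; exact: spn_gen.
Qed.

Definition Tw (u : 'cV[C]_d) := exists mu, inQplus g R' mu /\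
  weight_vec g rho (fun h => lam h - mu h) u.

Lemma LW_wv t : LW t -> exists nu, weight_vec g rho nu t /\ nu hS = lam hS.
Proof.
move=> [s [Hs ->]]; elim: s Hs => [|p s IH] Hs /=; first by exists lam.
have [nu [Hnu Enu]] := IH (fun q qs => Hs q ltac:(by rewrite inE qs orbT)).
have [ga [Rga Hga]] := Hs p (mem_head _ _).
exists (fun h => nu h + ga h); split; first exact: wv_root.
by rewrite /= (HR'0 Rga) addr0.
Qed.

Lemma forward v : Ugen rho (levi_alg g R') w v -> spn Tw v.
Proof.
move/Ugen_levi_LW; apply: spn_trans => t Ht.
have [nu [Hnu Enu]] := LW_wv Ht.
have := key (Ugen_nneg_NW (HW t)).
rewrite (Hnu hS hSc) Enu => /(_ erefl); apply: spn_trans => u [nu' [Hu Eu]].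
apply: spn_gen; exists (fun h => lam h - nu' h); split; first by have [] := nw_good Hu Eu.
apply: wv_ext (nword_wv Hu) => h _.
by rewrite opprB addrC subrK.
Qed.

Lemma backward v : spn Tw v -> spn (UG (levi_alg g R')) v.
Proof.
apply: spn_trans => u [mu [[n [al [Hal Emu]]] Hu]].
have mu0 : mu hS = 0.
  by rewrite Emu // big1 // => i _; apply: HR'0; have [] := Hal i.
have := key (Ugen_nneg_NW (HW u)).
rewrite (Hu hS hSc) mu0 subr0 => /(_ erefl); apply: spn_trans => t [nu [Ht Et]].
apply: spn_gen; apply: LW_UG; by have [] := nw_good Ht Et.
Qed.

End Rep.

Lemma trZ (K : pzRingType) m n (c : K) (x : 'M[K]_(m, n)) : (c *: x)^T = c *: x^T.
Proof. by apply/matrixP => i j; rewrite !mxE. Qed.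
Lemma trB (K : pzRingType) m n (x y : 'M[K]_(m, n)) : (x - y)^T = x^T - y^T.
Proof. by apply/matrixP => i j; rewrite !mxE. Qed.
Lemma trD (K : pzRingType) m n (x y : 'M[K]_(m, n)) : (x + y)^T = x^T + y^T.
Proof. by apply/matrixP => i j; rewrite !mxE. Qed.

Section Gen.
Variable R : realType.
Local Notation C := (R[i])%C.
Variable N : nat.
Local Notation M := ('M[C]_N).

Definition ff (k l : 'I_N) : M -> C := fun h => h k k - h l l.
Definition hz : M := \matrix_(i, j) if i == j then (N.-1)%:R - 2 * (i : nat)%:R else 0.

Lemma ffhz k l : ff k l hz = 2 * ((l : nat)%:R - (k : nat)%:R).
Proof. rewrite /ff /hz !mxE !eqxx; ring. Qed.

Lemma two_neq0 : (2 : C) != 0.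
Proof. by rewrite pnatr_eq0. Qed.

Lemma hz_eq (k l i j : 'I_N) : ff k l hz = ff i j hz -> (l + i = j + k)%N.
Proof.
rewrite !ffhz => /(mulfI two_neq0) E.
have : ((l + i)%N%:R : C) = (j + k)%N%:R.
  by rewrite !natrD -[(l : nat)%:R](subrK (k : nat)%:R) E addrAC subrK.
move/eqP; rewrite eqr_nat => /eqP H; lia.
Qed.

Lemma ffhz_neq0 (k l : 'I_N) : (k : nat) <> l -> ff k l hz != 0.
Proof.
move=> kl; rewrite ffhz mulf_eq0 negb_or two_neq0 /= subr_eq0 eqr_nat.
by apply/negP => /eqP E; apply: kl; rewrite E.
Qed.

Lemma mx_neq0 (x : M) : x != 0 -> exists k l, x k l != 0.
Proof.
move=> x0; apply: NNPP => H1; move/negP: x0; apply; apply/eqP/matrixP => k l.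
rewrite mxE; apply/eqP; apply: NNPP => H2; apply: H1; exists k, l; exact/negP.
Qed.

Variable g : M -> Prop.
Hypothesis glin : forall (c : C) x y, g x -> g y -> g (c *: x + y).
Hypothesis g0 : g 0.
Hypothesis gT : forall x, g x -> g x^T.
Hypothesis hzc : cartan g hz.

Lemma cartan_mull h (x : M) k l : cartan g h -> (h *m x) k l = h k k * x k l.
Proof.
move=> [_ hd]; rewrite mxE (bigD1 k) //= big1 ?addr0 // => j jk.
by rewrite hd ?mul0r // eq_sym.
Qed.

Lemma cartan_mulr h (x : M) k l : cartan g h -> (x *m h) k l = x k l * h l l.
Proof.
move=> [_ hd]; rewrite mxE (bigD1 l) //= big1 ?addr0 // => j jl.
by rewrite hd ?mulr0.
Qed.

Lemma lbr_entry h (x : M) k l : cartan g h -> lbr h x k l = (h k k - h l l) * x k l.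
Proof.
move=> ch; rewrite /lbr.
have -> : (h *m x - x *m h) k l = (h *m x) k l - (x *m h) k l by rewrite !mxE.
by rewrite cartan_mull // cartan_mulr // mulrBl [x k l * _]mulrC.
Qed.

Lemma root_entry a x h k l : rootsp g a x -> cartan g h -> x k l != 0 -> a h = ff k l h.
Proof.
move=> [_ Hx] ch xkl; apply: (mulIf xkl).
by rewrite /ff -lbr_entry // Hx // mxE.
Qed.

Lemma root_upper a x (k l : 'I_N) : rootsp g a x -> x k l != 0 -> (k < l)%N ->
  forall i j : 'I_N, (j <= i)%N -> x i j = 0.
Proof.
move=> Hx xkl kl i j ji; apply/eqP/negPn/negP => xij.
have E1 := root_entry Hx hzc xkl; have E2 := root_entry Hx hzc xij.
have := hz_eq (etrans (esym E1) E2); lia.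
Qed.

Lemma pos_of a x (k l : 'I_N) : rootsp g a x -> x k l != 0 -> (k < l)%N -> pos_root g a.
Proof.
move=> Hx xkl kl; have ne : x != 0 by apply: contraNneq xkl => ->; rewrite mxE.
split; first split.
- exists hz; split => //; rewrite (root_entry Hx hzc xkl); apply: ffhz_neq0; lia.
- by exists x.
- exists x; split => //; split; [exact: Hx.1 | exact: root_upper Hx xkl kl].
Qed.

Lemma diag_tr h : cartan g h -> h^T = h.
Proof.
move=> [_ hd]; apply/matrixP => i j; rewrite mxE.
case: (eqVneq i j) => [->//|ij]; by rewrite (hd i j ij) hd // eq_sym.
Qed.

Lemma rootsp_tr a x : rootsp g a x -> rootsp g (fun h => - a h) x^T.
Proof.
move=> [gx Hx]; split; first exact: gT.
move=> h ch; have := congr1 trmx (Hx h ch).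
rewrite /lbr trZ trB !trmx_mul (diag_tr ch) => E.
by rewrite -opprB E scaleNr.
Qed.

Lemma root_sign a : is_root g a -> pos_root g a \/ pos_root g (fun h => - a h).
Proof.
move=> [[h [ch ah]] [x [Hx x0]]].
have [k [l xkl]] := mx_neq0 x0.
case: (ltngtP k l) => [kl|lk|kl].
- by left; apply: pos_of Hx xkl kl.
- by right; apply: (pos_of (rootsp_tr Hx) (_ : x^T l k != 0) lk); rewrite mxE.
- by move: ah; rewrite (root_entry Hx ch xkl) /ff (val_inj kl) subrr eqxx.
Qed.

Lemma pos_root_pos b : pos_root g b ->
  exists (k l : 'I_N) x, [/\ (k < l)%N, rootsp g b x & x k l != 0].
Proof.
move=> [_ [x [Hx x0 [_ nx]]]]; have [k [l xkl]] := mx_neq0 x0.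
exists k, l, x; split => //; rewrite ltnNge; apply/negP => lk.
by move: xkl; rewrite nx // eqxx.
Qed.

Lemma pos_root_height b : pos_root g b -> exists m, (0 < m)%N /\ b hz = m%:R.
Proof.
move=> /pos_root_pos [k [l [x [kl Hx xkl]]]].
exists (l - k + (l - k))%N; split; first lia.
by rewrite (root_entry Hx hzc xkl) ffhz natrD natrB 1?ltnW // mulr_natl mulr2n.
Qed.

Hypothesis Hdec : forall x, nneg g x -> exists e : 'I_N -> 'I_N -> M,
  (forall k l, k != l -> rootsp g (ff k l) (e k l)) /\
  x = \sum_k \sum_l x k l *: e k l.

Lemma Hneg_span_gen x : nneg g x ->
  spn (fun y => exists b, pos_root g b /\ rootsp g (fun h => - b h) y) x.
Proof.
move=> Hx; have [e [He Ex]] := Hdec Hx; rewrite Ex.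
apply: spn_sum => k _; apply: spn_sum => l _.
case: (eqVneq (x k l) 0) => [->|xkl]; first by rewrite scale0r; apply: spn0.
have lk : (l < k)%N.
  by rewrite ltnNge; apply/negP => kl; move: xkl; rewrite Hx.2 // eqxx.
have kl : k != l by apply: contraTneq lk => ->; rewrite ltnn.
case: (eqVneq (e k l) 0) => [->|ekl]; first by rewrite scaler0; apply: spn0.
apply: spnZ; apply: spn_gen.
have Hr : is_root g (ff k l).
  split; last by exists (e k l); split => //; apply: He.
  exists hz; split => //; apply: ffhz_neq0; lia.
case: (root_sign Hr) => Hp.
  exfalso; have [i [j [y [ij Hy yij]]]] := pos_root_pos Hp.
  have := hz_eq (root_entry Hy hzc yij); lia.
exists (fun h => - ff k l h); split => //; apply: rootsp_eqh (He k l kl) => h _.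
by rewrite opprK.
Qed.

Variable R' : (M -> C) -> Prop.
Hypothesis levi : is_levi g R'.
Variables (r : nat) (pa pb : 'I_r -> 'I_N) (om : 'I_r -> M).
Hypotheses (Homc : forall j, cartan g (om j))
  (Hpo : forall i j, ff (pa i) (pb i) (om j) = (i == j)%:R)
  (Hompos : forall b j, pos_root g b -> 0 <= b (om j))
  (HDL : forall b, pos_root g b -> (exists i, eqh g b (ff (pa i) (pb i))) \/
      (exists c e, [/\ pos_root g c, pos_root g e & eqh g b (fun h => c h + e h)])).

Definition brk j := asb (~ exists ga, R' ga /\ eqh g ga (ff (pa j) (pb j))).
Definition hS := \sum_(j < r | brk j) om j.

Lemma cartan_add h1 h2 : cartan g h1 -> cartan g h2 -> cartan g (h1 + h2).
Proof.
move=> [g1 d1] [g2 d2]; split; first by have := glin 1 g1 g2; rewrite scale1r.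
by move=> i j ij; rewrite mxE d1 // d2 // addr0.
Qed.

Lemma hSc : cartan g hS.
Proof.
rewrite /hS; elim/big_ind: _ => //; last by move=> *; apply: cartan_add.
by split => // i j _; rewrite mxE.
Qed.

Lemma root_ff b : is_root g b -> exists k l, eqh g b (ff k l).
Proof.
move=> [_ [x [Hx x0]]]; have [k [l xkl]] := mx_neq0 x0.
by exists k, l => h ch; apply: root_entry Hx ch xkl.
Qed.

Lemma root_hS b : is_root g b -> b hS = \sum_(j < r | brk j) b (om j).
Proof.
move=> /root_ff [k [l E]]; rewrite (E _ hSc).
rewrite /ff /hS !summxE -sumrB; apply: eq_bigr => j _; by rewrite (E _ (Homc j)).
Qed.

Lemma sum_delta (i : 'I_r) : \sum_(j < r | brk j) ((i == j)%:R : C) = (brk i)%:R.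
Proof.
case: (boolP (brk i)) => bi.
  rewrite (bigD1 i) //= eqxx big1 ?addr0 // => j /andP [_ ji].
  by rewrite eq_sym (negbTE ji).
rewrite big1 // => j bj; case: (eqVneq i j) => [ij|//]; by move: bi; rewrite ij bj.
Qed.

Lemma simple_hS b i : pos_root g b -> eqh g b (ff (pa i) (pb i)) ->
  b hS = (brk i)%:R.
Proof.
move=> Hb E; rewrite root_hS; last by case: Hb.
rewrite -sum_delta; apply: eq_bigr => j _; by rewrite E // Hpo.
Qed.

Lemma hS_pos b : pos_root g b -> 0 <= b hS.
Proof.
move=> Hb; rewrite root_hS; last by case: Hb.
by apply: sumr_ge0 => j _; apply: Hompos.
Qed.

Lemma height_ind (P : (M -> C) -> Prop) :
  (forall b, pos_root g b ->
     (forall c, pos_root g c -> forall m n, c hz = m%:R -> b hz = n%:R -> (m < n)%N -> P c) -> P b) ->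
  forall b, pos_root g b -> P b.
Proof.
move=> IH b Hb; have [n [_ En]] := pos_root_height Hb.
elim/ltn_ind: n b Hb En => n IHn b Hb En.
apply: (IH b Hb) => c Hc m n' Em En' mn.
apply: (IHn m) Hc Em.
by move: En'; rewrite En => /eqP; rewrite eqr_nat => /eqP ->.
Qed.

Lemma sum_heights b c e : pos_root g b -> pos_root g c -> pos_root g e ->
  eqh g b (fun h => c h + e h) ->
  exists mb mc me, [/\ b hz = mb%:R, c hz = mc%:R, e hz = me%:R, (mc < mb)%N & (me < mb)%N].
Proof.
move=> Hb Hc He E.
have [mb [_ Eb]] := pos_root_height Hb.
have [mc [mc0 Ec]] := pos_root_height Hc.
have [me [me0 Ee]] := pos_root_height He.
exists mb, mc, me; split => //.
have : (mb%:R : C) = (mc + me)%:R by rewrite natrD -Ec -Ee -Eb E.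
  move/eqP; rewrite eqr_nat => /eqP; lia.
have : (mb%:R : C) = (mc + me)%:R by rewrite natrD -Ec -Ee -Eb E.
move/eqP; rewrite eqr_nat => /eqP; lia.
Qed.

Lemma R'pos_hS ga : R' ga -> pos_root g ga -> ga hS = 0.
Proof.
move=> Rga Hga; move: Hga Rga; apply: (@height_ind (fun ga => R' ga -> ga hS = 0)) => // b Hb IH Rb.
have [_ _ _ Hsimp] := levi.
case: (classic (simple_in g (fun b => R' b /\ pos_root g b) b)) => Hs.
  have [_ Hns] := Hsimp b Hs.
  case: (HDL Hb) => [[i Ei]|[c [e [Hc He Ece]]]]; last first.
    by exfalso; apply: Hns; exists c, e; split.
  rewrite (simple_hS Hb Ei) /brk; case: asbP => // H; exfalso; apply: H; by exists b.
have [c [e [[Rc Pc] [Re Pe] Ece]]] : exists c e,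
    [/\ R' c /\ pos_root g c, R' e /\ pos_root g e & eqh g b (fun h => c h + e h)].
  apply: NNPP => H; apply: Hs; split => // [[c [e [H1 H2 H3]]]]; apply: H; by exists c, e.
have [mb [mc [me [Eb Ec Ee ltc lte]]]] := sum_heights Hb Pc Pe Ece.
by rewrite (Ece _ hSc) (IH c Pc mc mb) // (IH e Pe me mb) // addr0.
Qed.

Lemma HR'0 ga : R' ga -> ga hS = 0.
Proof.
move=> Rga; have [Hroot _ Hneg _] := levi.
case: (root_sign (Hroot _ Rga)) => Hp; first exact: R'pos_hS.
have := R'pos_hS (Hneg _ Rga) Hp.
by move=> /= /eqP; rewrite oppr_eq0 => /eqP.
Qed.

Lemma Hzero b : pos_root g b -> b hS = 0 -> exists ga, R' ga /\ eqh g ga b.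
Proof.
move: b; apply: height_ind => b Hb IH Hb0.
have [Hroot Hadd _ _] := levi.
case: (HDL Hb) => [[i Ei]|[c [e [Hc He Ece]]]].
  move: Hb0; rewrite (simple_hS Hb Ei) /brk; case: asbP => [_|H _].
    by move/eqP; rewrite /= oner_eq0.
  have [ga [Rga Ega]] : exists ga, R' ga /\ eqh g ga (ff (pa i) (pb i)).
    exact: NNPP.
  by exists ga; split => // h ch; rewrite Ega // Ei.
have [mb [mc [me [Eb Ec Ee ltc lte]]]] := sum_heights Hb Hc He Ece.
have c0 := hS_pos Hc; have e0 := hS_pos He.
have : c hS + e hS == 0 by rewrite -(Ece _ hSc) Hb0.
rewrite paddr_eq0 // => /andP [/eqP c1 /eqP e1].
have [g1 [R1 E1]] := IH c Hc mc mb Ec Eb ltc c1.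
have [g2 [R2 E2]] := IH e He me mb Ee Eb lte e1.
have E12 : eqh g (fun h => g1 h + g2 h) b by move=> h ch; rewrite Ece // E1 // E2.
exists (fun h => g1 h + g2 h); split => //; apply: Hadd R1 R2 _.
apply: (is_root_eqh (a := b)); last by case: Hb.
by move=> h ch; rewrite E12.
Qed.

End Gen.

Section Main.
Variable R : realType.
Local Notation C := (R[i])%C.
Variable N : nat.
Local Notation M := ('M[C]_N).

Definition Fam (g : M -> Prop) : Prop :=
  [/\ (forall (c : C) x y, g x -> g y -> g (c *: x + y)), g 0,
      (forall x y, g x -> g y -> g (lbr x y)), (forall x, g x -> g x^T) &
      [/\ cartan g (hz R N),
       (forall x, nneg g x -> exists e : 'I_N -> 'I_N -> M,
          (forall k l, k != l -> rootsp g (ff k l) (e k l)) /\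
          x = \sum_k \sum_l x k l *: e k l) &
       exists r (pa pb : 'I_r -> 'I_N) (om : 'I_r -> M),
         [/\ (forall j, cartan g (om j)),
             (forall i j, ff (pa i) (pb i) (om j) = (i == j)%:R),
             (forall b j, pos_root g b -> 0 <= b (om j)) &
             (forall b, pos_root g b -> (exists i, eqh g b (ff (pa i) (pb i))) \/
               (exists c e, [/\ pos_root g c, pos_root g e & eqh g b (fun h => c h + e h)]))]]].

Lemma main_abstract (g : M -> Prop) (R' : (M -> C) -> Prop) d
  (rho : M -> nat -> 'M[C]_d) (w : 'cV[C]_d) (lam : M -> C) :
  Fam g -> is_levi g R' -> current_rep g rho ->
  weight_vec g rho lam w -> (forall v, Ugen rho (nneg g) w v) ->
  forall v, Ugen rho (levi_alg g R') w v <->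
    exists (n : nat) (mu : 'I_n -> M -> C) (u : 'I_n -> 'cV[C]_d),
      (forall j, inQplus g R' (mu j) /\ weight_vec g rho (fun h => lam h - mu j h) (u j)) /\
      v = \sum_(j < n) u j.
Proof.
move=> [glin g0 gbr gT [hzc Hdec [r [pa [pb [om [Homc Hpo Hompos HDL]]]]]]] levi rep Hw HW v.
have Hns : forall x, nneg g x ->
  spn (fun y => exists b, pos_root g b /\ rootsp g (fun h => - b h) y) x.
  by move=> x Hx; apply: (Hneg_span_gen (g:=g)).
set hS0 := hS g R' pa pb om.
have hSc' : cartan g hS0 by apply: (hSc (g:=g)).
have HR'0' : forall ga, R' ga -> ga hS0 = 0.
  by move=> ga Rga; apply: (HR'0 (g:=g)).
have Hpos' : forall b, pos_root g b -> 0 <= b hS0.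
  by move=> b Hb; apply: (hS_pos (g:=g)).
have Hzero' : forall b, pos_root g b -> b hS0 = 0 -> exists ga, R' ga /\ eqh g ga b.
  by move=> b Hb Hb0; apply: (Hzero (g:=g)).
split.
  move=> Hv.
  have := forward glin g0 gbr rep levi Hns Hw hSc' HR'0' Hpos' Hzero' HW Hv.
  move/inspan_spn => [n [c [u [Hu ->]]]].
  exists n, (fun i => proj1_sig (constructive_indefinite_description _ (Hu i))),
    (fun i => c i *: u i); split => // j.
  case: (constructive_indefinite_description _ (Hu j)) => mu [Hmu Hwu] /=.
  by split => //; apply: wvZ.
move=> [n [mu [u [Hu ->]]]].
have : spn (Tw g rho R' lam) (\sum_(j < n) u j).
  apply/inspan_spn; exists n, (fun _ => 1), u; split; last by apply: eq_bigr => i _; rewrite scale1r.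
  by move=> j; exists (mu j); apply: Hu.
move/(backward glin g0 rep levi Hns Hw hSc' HR'0' Hpos' Hzero' HW).
by move/inspan_spn.
Qed.
End Main.

Section JFam.
Variable R : realType.
Local Notation C := (R[i])%C.
Variable N : nat.
Local Notation M := ('M[C]_N).
Variables (J : M) (eps : C).
Hypotheses (JT : J^T = eps *: J) (JJt : J *m J^T = 1%:M) (eps2 : eps * eps = 1)
  (Jsupp : forall i j : 'I_N, J i j != 0 -> (i + j)%N = N.-1).

Definition gJ (x : M) := x^T *m J + J *m x = 0.

Lemma Jrev (i j : 'I_N) : J i j != 0 -> j = rev_ord i.
Proof.
move=> /Jsupp H; apply: val_inj => /=; have := ltn_ord i; have := ltn_ord j; lia.
Qed.

Lemma mulJr (A : M) a b : (A *m J) a b = A a (rev_ord b) * J (rev_ord b) b.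
Proof.
rewrite mxE (bigD1 (rev_ord b)) //= big1 ?addr0 // => c cb.
case: (eqVneq (J c b) 0) => [->|Jcb]; first by rewrite mulr0.
by move: cb; rewrite (Jrev Jcb) rev_ordK eqxx.
Qed.

Lemma mulJl (A : M) a b : (J *m A) a b = J a (rev_ord a) * A (rev_ord a) b.
Proof.
rewrite mxE (bigD1 (rev_ord a)) //= big1 ?addr0 // => c ca.
case: (eqVneq (J a c) 0) => [->|Jac]; first by rewrite mul0r.
by move: ca; rewrite (Jrev Jac) eqxx.
Qed.

Lemma mulJtl (A : M) a b : (J^T *m A) a b = J (rev_ord a) a * A (rev_ord a) b.
Proof.
rewrite mxE (bigD1 (rev_ord a)) //= big1 ?addr0 ?mxE // => c ca.
rewrite mxE; case: (eqVneq (J c a) 0) => [->|Jca]; first by rewrite mul0r.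
by move: ca; rewrite (Jrev Jca) rev_ordK eqxx.
Qed.

Lemma JTe i j : J j i = eps * J i j.
Proof. by have := congr1 (fun A : M => A i j) JT; rewrite !mxE. Qed.

Lemma JJ : J *m J = eps%:M.
Proof.
have E : J = eps *: J^T by rewrite JT scalerA eps2 scale1r.
by rewrite {2}E -scalemxAr JJt scalemx1.
Qed.

Lemma JtJ : J^T *m J = 1%:M.
Proof. exact: mulmx1C JJt. Qed.

Lemma Jsq i : J i (rev_ord i) * J i (rev_ord i) = 1.
Proof.
have := congr1 (fun A : M => A i i) JJt; rewrite mulJl.
by rewrite [_^T _ _]mxE [X in _ = X -> _]mxE eqxx.
Qed.

Lemma Jnz i : J i (rev_ord i) != 0.
Proof. by apply/negP => /eqP E; have := Jsq i; rewrite E mulr0 => /eqP; rewrite eq_sym oner_eq0. Qed.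

Lemma gJlin c x y : gJ x -> gJ y -> gJ (c *: x + y).
Proof.
move=> Hx Hy; rewrite /gJ trD trZ mulmxDl mulmxDr -scalemxAl -scalemxAr addrACA.
by rewrite -scalerDr Hx Hy scaler0 addr0.
Qed.

Lemma gJ0 : gJ 0.
Proof.
rewrite /gJ (_ : (0 : M)^T = 0); last by apply/matrixP => i j; rewrite !mxE.
by rewrite mul0mx mulmx0 addr0.
Qed.

Lemma gJanti x : gJ x -> x^T *m J = - (J *m x).
Proof. by move/eqP; rewrite addr_eq0 => /eqP. Qed.

Lemma gJbr x y : gJ x -> gJ y -> gJ (lbr x y).
Proof.
move=> /gJanti Ax /gJanti Ay.
rewrite /gJ /lbr trB !trmx_mul mulmxBl mulmxBr -!mulmxA Ax Ay !mulmxN !mulmxA.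
by rewrite Ax Ay !mulNmx !opprK addrA subrK subrr.
Qed.

Lemma gJT x : gJ x -> gJ x^T.
Proof.
move=> Hx; have Ax := gJanti Hx.
have Ex : x^T = - (J *m x *m J^T).
  by rewrite -mulNmx -Ax -mulmxA JJt mulmx1.
rewrite /gJ trmxK Ex mulmxN !mulmxA JJ mul_scalar_mx JT -scalemxAl -scalemxAr.
by rewrite scalerA eps2 scale1r subrr.
Qed.

Lemma diagtr (h : M) : (forall i j, i != j -> h i j = 0) -> h^T = h.
Proof.
move=> hd; apply/matrixP => i j; rewrite mxE.
case: (eqVneq i j) => [->//|ij]; by rewrite (hd i j ij) hd // eq_sym.
Qed.

Lemma cartan_rev h a : cartan gJ h -> h (rev_ord a) (rev_ord a) = - h a a.
Proof.
move=> [gh hd]; have := congr1 (fun A : M => A a (rev_ord a)) gh.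
rewrite mxE [RHS]mxE mulJr mulJl rev_ordK (diagtr hd) => /eqP.
rewrite [h a a * _]mulrC -mulrDr mulf_eq0 (negbTE (Jnz a)) /= addr_eq0 => /eqP ->.
by rewrite opprK.
Qed.

Definition dgm (f : 'I_N -> C) : M := \matrix_(i, j) if i == j then f i else 0.

Lemma dgm_cartan f : (forall a, f (rev_ord a) = - f a) -> cartan gJ (dgm f).
Proof.
move=> Hf; split; last by move=> i j ij; rewrite mxE (negbTE ij).
rewrite /gJ diagtr; last by move=> i j ij; rewrite mxE (negbTE ij).
apply/matrixP => a b; rewrite mxE [RHS]mxE mulJr mulJl !mxE.
case: (eqVneq b (rev_ord a)) => [->|ba].
  by rewrite rev_ordK !eqxx Hf mulrC -mulrDr subrr mulr0.
have ab : a != rev_ord b by apply: contraNneq ba => ->; rewrite rev_ordK.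
by rewrite (negbTE ab) mul0r mulr0 addr0.
Qed.

Definition P (y : M) : M := y - J^T *m y^T *m J.

Lemma P_g y : gJ (P y).
Proof.
have E1 : (P y)^T *m J = y^T *m J - eps *: (J^T *m y).
  by rewrite /P trB !trmx_mul !trmxK mulmxBl -!mulmxA JJ mul_mx_scalar -scalemxAr.
have E2 : J *m P y = J *m y - y^T *m J.
  by rewrite /P mulmxBr !mulmxA JJt mul1mx.
rewrite /gJ E1 E2 JT -scalemxAl scalerA eps2 scale1r.
by rewrite addrA subrK subrr.
Qed.

Lemma P_add y z : P (y + z) = P y + P z.
Proof. by rewrite /P trD mulmxDr mulmxDl opprD addrACA. Qed.

Lemma P_scale c y : P (c *: y) = c *: P y.
Proof. by rewrite /P trZ -scalemxAr -scalemxAl scalerBr. Qed.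

Lemma P0 : P 0 = 0.
Proof. by rewrite -(scale0r (0 : M)) P_scale !scale0r. Qed.

Lemma P_sum (I : Type) (r : seq I) (F : I -> M) : P (\sum_(i <- r) F i) = \sum_(i <- r) P (F i).
Proof. exact: (big_morph P P_add P0). Qed.

Lemma P_2x x : gJ x -> P x = x + x.
Proof.
move=> Hx; rewrite /P -mulmxA (gJanti Hx) mulmxN mulmxA JtJ mul1mx opprK //.
Qed.

Lemma lbrZr (h y : M) c : lbr h (c *: y) = c *: lbr h y.
Proof. by rewrite /lbr -scalemxAr -scalemxAl scalerBr. Qed.

Lemma lbrB (h y z : M) : lbr h (y - z) = lbr h y - lbr h z.
Proof. by rewrite /lbr mulmxBr mulmxBl !opprD !opprK addrACA. Qed.

Lemma T_lbr h y : cartan gJ h ->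
  lbr h (J^T *m y^T *m J) = J^T *m (lbr h y)^T *m J.
Proof.
move=> [gh hd]; have hT := diagtr hd.
have hJ : J *m h = - (h *m J).
  by have := gJanti gh; rewrite hT => ->; rewrite opprK.
have hJt : h *m J^T = - (J^T *m h).
  have := congr1 trmx hJ; rewrite !trmx_mul hT.
  have -> : (- (h *m J))^T = - (J^T *m h) by rewrite -(scaleN1r (h *m J)) trZ trmx_mul hT scaleN1r.
  by [].
rewrite /lbr trB !trmx_mul hT mulmxBr mulmxBl.
rewrite !mulmxA hJt !mulNmx -!mulmxA hJ !mulmxN !mulmxA.
by rewrite opprK addrC.
Qed.

Lemma P_lbr h y : cartan gJ h -> lbr h (P y) = P (lbr h y).
Proof. by move=> ch; rewrite /P lbrB T_lbr. Qed.

Lemma lbr_delta h k l : cartan gJ h -> lbr h (delta_mx k l) = ff k l h *: delta_mx k l.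
Proof.
move=> ch; apply/matrixP => i j; rewrite (lbr_entry _ _ _ ch) !mxE /ff.
case: (eqVneq i k) => [->|ik]; case: (eqVneq j l) => [->|jl] //=; by rewrite ?mulr0.
Qed.

Lemma rvJ k l : rootsp gJ (ff k l) ((2^-1 : C) *: P (delta_mx k l)).
Proof.
split; first by have := gJlin (2^-1) (P_g (delta_mx k l)) gJ0; rewrite addr0.
move=> h ch; rewrite lbrZr P_lbr // lbr_delta // P_scale scalerA mulrC -scalerA //.
Qed.

Lemma half2 : (2^-1 : C) + 2^-1 = 1.
Proof. by field. Qed.

Lemma Hdec_J x : gJ x -> x = \sum_k \sum_l x k l *: ((2^-1 : C) *: P (delta_mx k l)).
Proof.
move=> Hx.
have E : x = (2^-1 : C) *: P x by rewrite P_2x // scalerDr -scalerDl half2 scale1r.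
rewrite {1}E {1}[x]matrix_sum_delta P_sum scaler_sumr; apply: eq_bigr => k _.
rewrite P_sum scaler_sumr; apply: eq_bigr => l _.
by rewrite P_scale !scalerA mulrC.
Qed.

Lemma sandwich (A : M) a b :
  (J^T *m A *m J) a b = J (rev_ord a) a * A (rev_ord a) (rev_ord b) * J (rev_ord b) b.
Proof. by rewrite mulJr mulJtl. Qed.

Lemma mxBe (A B : M) i j : (A - B) i j = A i j - B i j.
Proof. by rewrite !mxE. Qed.
Lemma mxDe (A B : M) i j : (A + B) i j = A i j + B i j.
Proof. by rewrite !mxE. Qed.

Lemma Pd_entry k l : P (delta_mx k l) k l = 1 - (l == rev_ord k)%:R * eps.
Proof.
rewrite /P mxBe sandwich !mxE !eqxx /=.
case: (eqVneq l (rev_ord k)) => [->|lk].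
  by rewrite rev_ordK !eqxx /= mulr1 JTe -mulrA Jsq mulr1 mul1r.
have : (rev_ord k == l) = false by apply/negbTE; rewrite eq_sym.
by move=> _; rewrite andbF mulr0 mul0r mul0r.
Qed.

Lemma gJ_kk x k : gJ x -> (1 + eps) * x k (rev_ord k) = 0.
Proof.
move=> Hx; have := congr1 (fun A : M => A k (rev_ord k)) (P_2x Hx).
rewrite /P mxBe mxDe sandwich [_^T _ _]mxE rev_ordK JTe.
have -> : eps * J k (rev_ord k) * x k (rev_ord k) * J k (rev_ord k) = eps * x k (rev_ord k).
  by rewrite -[RHS]mulr1 -(Jsq k); ring.
move/eqP; rewrite -subr_eq0 => /eqP E; rewrite -[RHS]oppr0 -E; ring.
Qed.

Definition validn (k l : nat) := (eps != 1) || (k + l != N.-1)%N.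

Lemma hz_cartanJ : cartan gJ (hz R N).
Proof.
rewrite /hz; apply: (@dgm_cartan (fun i : 'I_N => (N.-1)%:R - 2 * (i : nat)%:R)) => a /=.
have aN := ltn_ord a.
rewrite (_ : (N - a.+1)%N = (N.-1 - a)%N); last by lia.
rewrite natrB; last by lia.
ring.
Qed.

Lemma pos_posJ b : pos_root gJ b ->
  exists k l : 'I_N, [/\ (k < l)%N, validn k l & eqh gJ b (ff k l)].
Proof.
move=> Hb; have [k [l [x [kl Hx xkl]]]] := pos_root_pos Hb.
exists k, l; split => //; last by move=> h ch; apply: root_entry Hx ch xkl.
rewrite /validn; case: (eqVneq eps 1) => //= e1.
apply/negP => /eqP kl1.
have lk : l = rev_ord k by apply: val_inj => /=; have := ltn_ord l; lia.
have := gJ_kk k Hx.1; rewrite -lk e1 => /eqP; rewrite mulf_eq0 (negbTE xkl) orbF.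
by rewrite -mulr2n pnatr_eq0.
Qed.

Lemma rv_pos (a b : 'I_N) : (a < b)%N -> validn a b -> pos_root gJ (ff a b).
Proof.
move=> ab vab.
apply: (pos_of (g := gJ) _ (rvJ a b) (_ : _ a b != 0) ab).
  exact: hz_cartanJ.
rewrite [_ a b]mxE Pd_entry mulf_eq0 invr_eq0 negb_or two_neq0 /=.
case: (eqVneq b (rev_ord a)) => [ba|ba]; last by rewrite mul0r subr0 oner_eq0.
move: vab; rewrite /validn ba /= mul1r subr_eq0 eq_sym => /orP [//|].
have := ltn_ord a; move=> aN /negP []; apply/eqP; lia.
Qed.

Lemma mirror_eqh (k l : 'I_N) : eqh gJ (ff k l) (ff (rev_ord l) (rev_ord k)).
Proof. by move=> h ch; rewrite /ff !cartan_rev //; ring. Qed.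

Variables (r : nat) (pa pb : 'I_r -> 'I_N) (s : 'I_r -> nat -> int) (cc : 'I_r -> C).
Definition omJ j := dgm (fun k : 'I_N => cc j * (s j k)%:~R).
Hypotheses (S1 : forall j (k : 'I_N), s j (rev_ord k) = - s j k)
  (S2 : forall i j, cc j * (s j (pa i) - s j (pb i))%:~R = (i == j)%:R)
  (S3 : forall j, 0 <= cc j)
  (S4 : forall j (k l : 'I_N), (k < l)%N -> validn k l -> (s j l <= s j k)%R)
  (S5 : forall k l : nat, (k < l < N)%N -> (k + l <= N.-1)%N -> validn k l ->
     [\/ exists i, k = pa i /\ l = pb i,
         exists m, [/\ (k < m < l)%N, validn k m & validn m l] |
         exists m, [/\ (N.-1 - l < m < N.-1 - k)%N, validn (N.-1 - l) m & validn m (N.-1 - k)]]).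

Lemma omJ_cartan j : cartan gJ (omJ j).
Proof. by apply: dgm_cartan => a /=; rewrite S1 mulrNz mulrN. Qed.

Lemma omJ_ff j (k l : 'I_N) : ff k l (omJ j) = cc j * (s j k - s j l)%:~R.
Proof. by rewrite /ff /omJ !mxE !eqxx intrB mulrBr. Qed.

Lemma HpoJ i j : ff (pa i) (pb i) (omJ j) = (i == j)%:R.
Proof. by rewrite omJ_ff S2. Qed.

Lemma HomposJ b j : pos_root gJ b -> 0 <= b (omJ j).
Proof.
move=> /pos_posJ [k [l [kl vkl E]]]; rewrite (E _ (omJ_cartan j)) omJ_ff.
by apply: mulr_ge0 => //; rewrite ler0z subr_ge0; apply: S4.
Qed.

Lemma DL_norm b (k l : 'I_N) : (k < l)%N -> validn k l -> (k + l <= N.-1)%N ->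
  eqh gJ b (ff k l) ->
  (exists i, eqh gJ b (ff (pa i) (pb i))) \/
  (exists c e, [/\ pos_root gJ c, pos_root gJ e & eqh gJ b (fun h => c h + e h)]).
Proof.
move=> kl vkl kl1 E.
have lN := ltn_ord l; have kN := ltn_ord k.
have [[i [ki li]]|[m [/andP [km ml] v1 v2]]|[m [/andP [m1 m2] v1 v2]]] :=
  S5 (k := k) (l := l) (ltac:(by rewrite kl lN)) kl1 vkl.
- left; exists i; have -> : pa i = k by apply: val_inj.
  by have -> : pb i = l by apply: val_inj.
- have mN : (m < N)%N by lia.
  set mo := Ordinal mN.
  right; exists (ff k mo), (ff mo l); split.
  + by apply: rv_pos.
  + by apply: rv_pos.
  + by move=> h ch; rewrite E // /ff; ring.
- have mN : (m < N)%N by lia.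
  set mo := Ordinal mN.
  have rl : (rev_ord l : nat) = (N.-1 - l)%N by rewrite /=; lia.
  have rk : (rev_ord k : nat) = (N.-1 - k)%N by rewrite /=; lia.
  right; exists (ff (rev_ord l) mo), (ff mo (rev_ord k)); split.
  + by apply: rv_pos; rewrite ?rl //=.
  + by apply: rv_pos; rewrite ?rk //=.
  + by move=> h ch; rewrite E // mirror_eqh // /ff; ring.
Qed.

Lemma HDLJ b : pos_root gJ b ->
  (exists i, eqh gJ b (ff (pa i) (pb i))) \/
  (exists c e, [/\ pos_root gJ c, pos_root gJ e & eqh gJ b (fun h => c h + e h)]).
Proof.
move=> /pos_posJ [k [l [kl vkl E]]].
have lN := ltn_ord l; have kN := ltn_ord k.
case: (leqP (k + l) N.-1) => kl1; first exact: DL_norm kl vkl kl1 E.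
apply: (DL_norm (k := rev_ord l) (l := rev_ord k)).
- rewrite /=; lia.
- move: vkl; rewrite /validn /= => /orP [->//|H]; apply/orP; right; apply/eqP => H2.
  by move/eqP: H; apply; lia.
- rewrite /=; lia.
- by move=> h ch; rewrite E // mirror_eqh.
Qed.

Lemma Fam_J : Fam gJ.
Proof.
split.
- exact: gJlin.
- exact: gJ0.
- exact: gJbr.
- exact: gJT.
split.
- exact: hz_cartanJ.
- move=> x [gx _]; exists (fun k l => (2^-1 : C) *: P (delta_mx k l)); split.
    by move=> k l _; apply: rvJ.
  exact: Hdec_J.
- exists r, pa, pb, omJ; split.
  + exact: omJ_cartan.
  + exact: HpoJ.
  + exact: HomposJ.
  + exact: HDLJ.
Qed.

End JFam.

Section Forms.
Variable R : realType.
Local Notation C := (R[i])%C.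
Variable N : nat.
Local Notation M := ('M[C]_N).

Lemma orth_T : (orth_form R N : M)^T = (1 : C) *: orth_form R N.
Proof. by apply/matrixP => i j; rewrite !mxE addnC mul1r. Qed.

Lemma orth_supp (i j : 'I_N) : (orth_form R N : M) i j != 0 -> (i + j)%N = N.-1.
Proof. by rewrite mxE; case: (eqVneq (i + j)%N N.-1) => // _; rewrite eqxx. Qed.

Lemma orth_JJt : (orth_form R N : M) *m (orth_form R N)^T = 1%:M.
Proof.
apply/matrixP => a b; rewrite (mulJl orth_supp) !mxE.
have aN := ltn_ord a; have bN := ltn_ord b.
rewrite (_ : (a + rev_ord a == N.-1)%N = true); last by apply/eqP => /=; lia.
rewrite mul1r; case: (eqVneq a b) => [->|ab].
  by rewrite (_ : (b + rev_ord b == N.-1)%N = true) //; apply/eqP => /=; lia.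
rewrite (_ : (b + rev_ord a == N.-1)%N = false) //; apply/negbTE/eqP => /= H.
by move/eqP: ab; apply; apply: val_inj => /=; lia.
Qed.

Hypothesis Nev : ~~ odd N.

Lemma half_N : N = (N./2 + N./2)%N.
Proof. by rewrite -{1}(odd_double_half N) (negbTE Nev) add0n addnn. Qed.

Lemma sympl_supp (i j : 'I_N) : (sympl_form R N : M) i j != 0 -> (i + j)%N = N.-1.
Proof. by rewrite mxE; case: (eqVneq (i + j)%N N.-1) => // _; rewrite eqxx. Qed.

Lemma sympl_T : (sympl_form R N : M)^T = (-1 : C) *: sympl_form R N.
Proof.
apply/matrixP => i j; rewrite !mxE addnC.
case: eqP => H; last by rewrite mulr0.
have hN := half_N; have iN := ltn_ord i; have jN := ltn_ord j.
set n := N./2 in hN *.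
case: ifP => H1; case: ifP => H2; rewrite ?mulr1 ?mulN1r ?opprK //; exfalso; lia.
Qed.
Lemma sympl_JJt : (sympl_form R N : M) *m (sympl_form R N)^T = 1%:M.
Proof.
apply/matrixP => a b; rewrite (mulJl sympl_supp) !mxE.
have aN := ltn_ord a; have bN := ltn_ord b.
rewrite (_ : (a + rev_ord a == N.-1)%N = true); last by apply/eqP => /=; lia.
case: (eqVneq a b) => [->|ab].
  rewrite (_ : (b + rev_ord b == N.-1)%N = true) /=; last by apply/eqP => /=; lia.
  by case: ifP => _; rewrite ?eqxx /= ?mulr1 ?mulrNN ?mulr1.
rewrite (_ : (b + rev_ord a == N.-1)%N = false) ?mulr0 //; apply/negbTE/eqP => /= H.
by move/eqP: ab; apply; apply: val_inj => /=; lia.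
Qed.

End Forms.

Definition st (N j k : nat) : int :=
  if (k <= j)%N then 1 else if (N.-1 - j <= k)%N then -1 else 0.

Lemma m1_neq1 (R : realType) : (-1 : (R[i])%C) != 1.
Proof. by rewrite -subr_eq0 -opprD oppr_eq0 -mulr2n pnatr_eq0. Qed.

Section Sp.
Variable R : realType.
Local Notation C := (R[i])%C.
Variable N : nat.
Local Notation M := ('M[C]_N).
Hypotheses (N2 : (2 <= N)%N) (Nev : ~~ odd N).

Lemma Fam_sp : Fam (gJ (sympl_form R N : M)).
Proof.
have hN := half_N Nev; set n := N./2 in hN.
have paN : forall i : 'I_n, (i < N)%N by move=> i; have := ltn_ord i; lia.
have pbN : forall i : 'I_n, (i.+1 < N)%N by move=> i; have := ltn_ord i; lia.
apply: (@Fam_J R N (sympl_form R N) (-1) _ _ _ _ n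
  (fun i => Ordinal (paN i)) (fun i => Ordinal (pbN i))
  (fun j k => st N j k) (fun j : 'I_n => if (j.+1 == n)%N then 2^-1 else 1)).
- exact: sympl_T.
- exact: sympl_JJt.
- by rewrite mulrNN mul1r.
- exact: sympl_supp.
- move=> j k /=; have := ltn_ord j; have := ltn_ord k => kN jn.
  rewrite /st; repeat case: ifP => ?; lia.
- move=> i j /=.
  have D : (st N j i - st N j i.+1 = if (i == j :> nat) then (if (j.+1 == n)%N then 2%:Z else 1%:Z) else 0%:Z)%R.
    have := ltn_ord j; have := ltn_ord i => iN jn.
    rewrite /st; repeat case: ifP => ?; lia.
  rewrite D; case: (eqVneq (i : nat) j) => [ij|ij].
    rewrite (_ : i = j); last exact: val_inj.
    by rewrite eqxx; case: ifP => _ /=; rewrite ?mulr1 // mulVf // two_neq0.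
  rewrite mulr0 (_ : (i == j) = false) //; apply/negbTE; apply: contraNneq ij => ->.
  by [].
- by move=> j; case: ifP => _; rewrite ?invr_ge0 ?ler0n ?ler01.
- move=> j k l kl _ /=; have := ltn_ord j; have := ltn_ord l => lN jn.
  rewrite /st; repeat case: ifP => ?; lia.
- move=> k l /andP [kl lN] kl1 _.
  have vt : forall a b, validn N (-1 : C) a b by move=> a b; rewrite /validn m1_neq1.
  case: (eqVneq l k.+1) => [lk|lk].
    constructor 1; have kn : (k < n)%N by lia.
    by exists (Ordinal kn).
  constructor 2; exists k.+1; split => //; lia.
Qed.
End Sp.

Ltac crush := repeat (case: ifP => ?; try (exfalso; lia)); try lia.

Section SoOdd.
Variable R : realType.
Local Notation C := (R[i])%C.
Variable N : nat.
Local Notation M := ('M[C]_N).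
Hypotheses (N3 : (3 <= N)%N) (Nod : odd N).

Lemma Fam_soodd : Fam (gJ (orth_form R N : M)).
Proof.
have hN : N = (N./2 + N./2).+1 by rewrite -{1}(odd_double_half N) Nod addnn.
set n := N./2 in hN.
have paN : forall i : 'I_n, (i < N)%N by move=> i; have := ltn_ord i; lia.
have pbN : forall i : 'I_n, (i.+1 < N)%N by move=> i; have := ltn_ord i; lia.
apply: (@Fam_J R N (orth_form R N) 1 _ _ _ _ n
  (fun i => Ordinal (paN i)) (fun i => Ordinal (pbN i))
  (fun j k => st N j k) (fun j : 'I_n => 1)).
- exact: orth_T.
- exact: orth_JJt.
- by rewrite mulr1.
- exact: orth_supp.
- move=> j k /=; have := ltn_ord j; have := ltn_ord k => kN jn.
  rewrite /st; crush.
- move=> i j /=.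
  have D : (st N j i - st N j i.+1 = if (i == j :> nat) then 1%:Z else 0%:Z)%R.
    have := ltn_ord j; have := ltn_ord i => iN jn.
    rewrite /st; crush.
  rewrite D mul1r; case: (eqVneq (i : nat) j) => [ij|ij].
    by rewrite (_ : i = j) ?eqxx //; exact: val_inj.
  rewrite (_ : (i == j) = false) //; apply/negbTE; apply: contraNneq ij => ->.
  by [].
- by move=> j; rewrite ler01.
- move=> j k l kl _ /=; have := ltn_ord j; have := ltn_ord l => lN jn.
  rewrite /st; crush.
- move=> k l /andP [kl lN] kl1.
  rewrite /validn eqxx /= => /eqP v.
  case: (eqVneq l k.+1) => [lk|lk].
    constructor 1; have kn : (k < n)%N by lia.
    by exists (Ordinal kn).
  case: (eqVneq (k.+1 + l)%N N.-1) => [e|e].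
    constructor 3; exists k.+2; split.
    + lia.
    + apply/eqP; lia.
    + apply/eqP; lia.
  constructor 2; exists k.+1; split => //.
  + lia.
  + apply/eqP; lia.
Qed.
End SoOdd.

Section SoEven.
Variable R : realType.
Local Notation C := (R[i])%C.
Variable N : nat.
Local Notation M := ('M[C]_N).
Hypotheses (N6 : (5 <= N)%N) (Nev : ~~ odd N).

Definition special (n k : nat) : int :=
  if (k <= n - 2)%N then 1 else if (k == n - 1)%N then -1 else if (k == n)%N then 1 else -1.

Lemma Fam_soeven : Fam (gJ (orth_form R N : M)).
Proof.
have hN := half_N Nev; set n := N./2 in hN.
have paN : forall i : 'I_n, ((if (i < n - 1)%N then (i : nat) else n - 2) < N)%N.
  by move=> i; have := ltn_ord i; case: ifP => _; lia.
have pbN : forall i : 'I_n, ((if (i < n - 1)%N then i.+1 else n) < N)%N.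
  by move=> i; have := ltn_ord i; case: ifP => _; lia.
apply: (@Fam_J R N (orth_form R N) 1 _ _ _ _ n
  (fun i => Ordinal (paN i)) (fun i => Ordinal (pbN i))
  (fun j k => if (j == (n - 2)%N :> nat) then special n k else st N j k)
  (fun j : 'I_n => if (j < n - 2)%N then 1 else 2^-1)).
- exact: orth_T.
- exact: orth_JJt.
- by rewrite mulr1.
- exact: orth_supp.
- move=> j k /=; have := ltn_ord j; have := ltn_ord k => kN jn.
  rewrite /st /special; crush.
- move=> i j /=.
  have D : ((if (j == (n - 2)%N :> nat) then special n (if (i < n - 1)%N then (i : nat) else (n - 2)%N) else
              st N j (if (i < n - 1)%N then (i : nat) else (n - 2)%N)) -
            (if (j == (n - 2)%N :> nat) then special n (if (i < n - 1)%N then i.+1 else n) else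
              st N j (if (i < n - 1)%N then i.+1 else n))
       = if (i == j :> nat) then (if (j < n - 2)%N then 1%:Z else 2%:Z) else 0%:Z)%R.
    have := ltn_ord j; have := ltn_ord i => iN jn.
    case Hi : (i < n - 1)%N; rewrite /st /special; crush.
  rewrite D; case: (eqVneq (i : nat) j) => [ij|ij].
    rewrite (_ : i = j) ?eqxx; last exact: val_inj.
    by case: ifP => _ /=; rewrite ?mulr1 // mulVf // two_neq0.
  rewrite mulr0 (_ : (i == j) = false) //; apply/negbTE; apply: contraNneq ij => ->.
  by [].
- by move=> j; case: ifP => _; rewrite ?invr_ge0 ?ler0n ?ler01.
- move=> j k l kl; rewrite /validn eqxx /= => /eqP v.
  have := ltn_ord j; have := ltn_ord l => lN jn.
  rewrite /st /special; crush.
- move=> k l /andP [kl lN] kl1.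
  rewrite /validn eqxx /= => /eqP v.
  case: (eqVneq l k.+1) => [lk|lk].
    constructor 1; have kn : (k < n)%N by lia.
    have Hk : (k < n - 1)%N by lia.
    by exists (Ordinal kn); rewrite /= Hk; split; lia.
  case: (eqVneq (k.+1 + l)%N N.-1) => [e|e].
    case: (eqVneq k (n - 2)%N) => [k2|k2].
      constructor 1; have kn : (n - 1 < n)%N by lia.
      by exists (Ordinal kn); rewrite /= ltnn; split; lia.
    constructor 3; exists k.+2; split.
    + lia.
    + apply/eqP; lia.
    + apply/eqP; lia.
  by constructor 2; exists k.+1; split => //; [lia | apply/eqP; lia].
Qed.
End SoEven.

Section SL.
Variable R : realType.
Local Notation C := (R[i])%C.
Variable N : nat.
Local Notation M := ('M[C]_N).
Hypothesis N2 : (2 <= N)%N.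

Definition gS (x : M) := \tr x = 0.

Lemma tr_dgm (f : 'I_N -> C) : \tr (dgm f) = \sum_i f i.
Proof. by rewrite /mxtrace; apply: eq_bigr => i _; rewrite mxE eqxx. Qed.

Lemma count_le j : (j < N)%N -> \sum_(k < N) (((k <= j)%N)%:R : C) = (j.+1)%:R.
Proof.
move=> jN.
rewrite -(big_mkord xpredT (fun k => (((k <= j)%N)%:R : C))).
rewrite (@big_cat_nat _ _ _ j.+1 0 N _ _ (leq0n _) jN) /=.
have -> : \sum_(0 <= k < j.+1) (((k <= j)%N)%:R : C) = \sum_(0 <= k < j.+1) 1.
  by rewrite big_nat_cond [RHS]big_nat_cond; apply: eq_bigr => k /andP [/andP [_ kj] _]; rewrite -ltnS kj.
rewrite sumr_const_nat subn0 big_nat_cond big1 ?addr0 // => k /andP [/andP [jk _] _].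
by rewrite leqNgt jk.
Qed.

Lemma lbr_delta_S h k l : cartan gS h -> lbr h (delta_mx k l) = ff k l h *: delta_mx k l.
Proof.
move=> ch; apply/matrixP => i j; rewrite (lbr_entry _ _ _ ch) !mxE /ff.
case: (eqVneq i k) => [->|ik]; case: (eqVneq j l) => [->|jl] //=; by rewrite ?mulr0.
Qed.

Lemma gS_delta (k l : 'I_N) : k != l -> gS (delta_mx k l).
Proof.
move=> kl; rewrite /gS /mxtrace big1 // => i _; rewrite mxE.
case: (eqVneq i k) => [ik|//]; case: (eqVneq i l) => [il|//].
by move: kl; rewrite -ik il eqxx.
Qed.

Lemma rvS (k l : 'I_N) : k != l -> rootsp gS (ff k l) (delta_mx k l).
Proof. by move=> kl; split; [exact: gS_delta | move=> h ch; apply: lbr_delta_S]. Qed.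

Lemma Fam_sl : Fam gS.
Proof.
have glin : forall (c : C) x y, gS x -> gS y -> gS (c *: x + y).
  by move=> c x y; rewrite /gS mxtraceD mxtraceZ => -> ->; rewrite mulr0 addr0.
have g0 : gS 0 by rewrite /gS mxtrace0.
have hzc : cartan gS (hz R N).
  split; last by move=> i j ij; rewrite mxE (negbTE ij).
  rewrite /gS /hz.
  set f := fun i : 'I_N => ((N.-1)%:R - 2 * (i : nat)%:R : C).
  have -> : \tr (\matrix_(i, j) (if i == j then (N.-1)%:R - 2 * (i : nat)%:R else 0) : M) = \sum_i f i.
    by rewrite /mxtrace; apply: eq_bigr => i _; rewrite mxE eqxx.
  have E : \sum_i f i = - \sum_i f i.
    rewrite [LHS](reindex_inj rev_ord_inj) -sumrN; apply: eq_bigr => i _.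
    rewrite /f /=; have iN := ltn_ord i.
    rewrite (_ : (N - i.+1)%N = (N.-1 - i)%N); last by lia.
    rewrite natrB; last by lia.
    ring.
  move/eqP: E; rewrite -subr_eq0 opprK -mulr2n -mulr_natl mulf_eq0 pnatr_eq0 /=.
  by move/eqP.
have paN : forall i : 'I_N.-1, (i < N)%N by move=> i; have := ltn_ord i; lia.
have pbN : forall i : 'I_N.-1, (i.+1 < N)%N by move=> i; have := ltn_ord i; lia.
have N0 : (N%:R : C) != 0 by rewrite pnatr_eq0; lia.
pose om (j : 'I_N.-1) := dgm (fun k : 'I_N => (((k <= j)%N)%:R : C) - (j.+1)%:R / N%:R).
have Homc : forall j, cartan gS (om j).
  move=> j; split; last by move=> a b ab; rewrite mxE (negbTE ab).
  rewrite /gS tr_dgm sumrB count_le; last by have := ltn_ord j; lia.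
  by rewrite sumr_const card_ord -[_ *+ N]mulr_natr mulfVK // subrr.
have ffom : forall j (k l : 'I_N), ff k l (om j) = ((k <= j)%N)%:R - ((l <= j)%N)%:R.
  by move=> j k l; rewrite /ff !mxE !eqxx; ring.
split => //.
- by move=> x y; rewrite /gS /lbr => _ _; rewrite raddfB /= mxtrace_mulC subrr.
- by move=> x; rewrite /gS mxtrace_tr.
split => //.
- move=> x [gx _]; exists (fun k l => delta_mx k l); split; first by move=> k l; apply: rvS.
  exact: matrix_sum_delta.
exists N.-1, (fun i => Ordinal (paN i)), (fun i => Ordinal (pbN i)), om; split => //.
- move=> i j; rewrite ffom /=.
  case: (ltngtP i j) => [ij|ji|ij].
  + rewrite subrr (_ : (i == j) = false) //; apply/negbTE; apply: contraTneq ij => ->.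
    by rewrite ltnn.
  + rewrite subrr (_ : (i == j) = false) //; apply/negbTE; apply: contraTneq ji => ->.
    by rewrite ltnn.
  + by rewrite (_ : i = j) ?eqxx ?subr0 //; exact: val_inj.
- move=> b j /(pos_root_pos (g := gS)) [k [l [x [kl Hx xkl]]]].
  rewrite (root_entry Hx (Homc j) xkl) ffom.
  case: (leqP l j) => lj.
    by rewrite (leq_trans (ltnW kl) lj) subrr.
  by rewrite subr0 ler0n.
- move=> b /(pos_root_pos (g := gS)) [k [l [x [kl Hx xkl]]]].
  have E : eqh gS b (ff k l) by move=> h ch; apply: root_entry Hx ch xkl.
  have lN := ltn_ord l.
  case: (eqVneq (l : nat) k.+1) => [lk|lk].
    left; have kN : (k < N.-1)%N by lia.
    exists (Ordinal kN); move=> h ch; rewrite E //.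
    have -> : Ordinal (paN (Ordinal kN)) = k by apply: val_inj.
    by have -> : Ordinal (pbN (Ordinal kN)) = l by apply: val_inj => /=; rewrite lk.
  right; have mN : (k.+1 < N)%N by lia.
  set m := Ordinal mN.
  have posf : forall a c : 'I_N, (a < c)%N -> pos_root gS (ff a c).
    move=> a c ac; apply: (pos_of (g := gS) hzc (rvS _) (_ : delta_mx a c a c != 0) ac).
      by apply: contraTneq ac => ->; rewrite ltnn.
    by rewrite mxE !eqxx oner_eq0.
  exists (ff k m), (ff m l); split.
  + by apply: posf => /=.
  + by apply: posf => /=; lia.
  + by move=> h ch; rewrite E // /ff; ring.
Qed.
End SL.

Theorem mainTheorem6 (R : realType) (N : nat) (g : 'M[(R[i])%C]_N -> Prop)
    (R' : ('M[(R[i])%C]_N -> (R[i])%C) -> Prop)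
    (d : nat) (rho : 'M[(R[i])%C]_N -> nat -> 'M[(R[i])%C]_d)
    (w : 'cV[(R[i])%C]_d) (lam : 'M[(R[i])%C]_N -> (R[i])%C) :
  classical_alg g -> is_levi g R' -> current_rep g rho ->
  w != 0 -> weight_vec g rho lam w ->
  (forall v, Ugen rho (nneg g) w v) ->
  forall v : 'cV[(R[i])%C]_d,
    Ugen rho (levi_alg g R') w v <->
    exists (n : nat) (mu : 'I_n -> 'M[(R[i])%C]_N -> (R[i])%C)
           (u : 'I_n -> 'cV[(R[i])%C]_d),
      (forall j, inQplus g R' (mu j) /\
                 weight_vec g rho (fun h => lam h - mu j h) (u j)) /\
      v = \sum_(j < n) u j.
Proof.
move=> Hcl levi rep _ Hw HW v.
have Fg : Fam g.
  case: Hcl => [[N2 Hg]|[N35 Hg]|[N2 Nev Hg]].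
  - have -> : g = @gS R N.
      by apply: functional_extensionality => x; apply: propositional_extensionality; exact: Hg.
    exact: Fam_sl.
  - have -> : g = gJ (orth_form R N).
      by apply: functional_extensionality => x; apply: propositional_extensionality; exact: Hg.
    case: (boolP (odd N)) => Nod.
      by apply: Fam_soodd => //; case: N35 => [->|]; lia.
    apply: Fam_soeven => //; case: N35 => [E|//].
    by move: Nod; rewrite E.
  - have -> : g = gJ (sympl_form R N).
      by apply: functional_extensionality => x; apply: propositional_extensionality; exact: Hg.
    exact: Fam_sp.
exact: main_abstract Fg levi rep Hw HW v.
Qed.
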